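(* Let $(t_n(x))_{n\ge0}$ be the generalized Gončarov basis associated with $(\mathfrak d,\mathcal Z)$, where $\mathfrak d$ is a delta operator and $\mathcal Z=(z_i)_{i\ge0}$ a grid. Then $(t_n)$ is of binomial type if and only if $\mathcal Z$ is an arithmetic progression with initial term $0$, i.e. there is $b\in\mathbb K$ with $z_i=ib$ for all $i\ge0$.
   Context: $\mathbb K$ is a field of characteristic zero; a delta operator is a linear operator $\mathfrak d$ on $\mathbb K[x]$ commuting with all shifts $E_a:f(x)\mapsto f(x+a)$ and with $\mathfrak d(x)$ a nonzero constant. $\varepsilon_z$ is evaluation at $z$. The generalized Gončarov basis associated with $(\mathfrak d,\mathcal Z)$ is the unique sequence $(t_n)_{n\ge0}$ with $\deg t_n=n$ and $\varepsilon_{z_i}(\mathfrak d^{\,i}(t_n))=n!\,\delta_{i,n}$ for all $i,n$. A sequence $(t_n)$ with $\deg t_n=n$ is of binomial type if $t_n(x+y)=\sum_{k=0}^n\binom nk t_k(x)t_{n-k}(y)$ for all $n$. *)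

(* Defs.v *)
From HB Require Import structures.
From mathcomp Require Import all_boot all_order all_algebra.
Set Implicit Arguments. Unset Strict Implicit. Unset Printing Implicit Defensive.
Import GRing.Theory.
Local Open Scope ring_scope.

Definition shift (K : fieldType) (a : K) (p : {poly K}) : {poly K} :=
  p \Po ('X + a%:P).

Definition is_delta_operator (K : fieldType) (d : {linear {poly K} -> {poly K}}) : Prop :=
  (forall (a : K) (p : {poly K}), d (shift a p) = shift a (d p)) /\
  (exists c : K, c != 0 /\ d 'X = c%:P).

Definition is_gen_goncarov_basis (K : fieldType) (d : {linear {poly K} -> {poly K}})
    (z : nat -> K) (t : nat -> {poly K}) : Prop :=
  (forall n, size (t n) = n.+1) /\
  (forall i n, (iter i d (t n)).[z i] = if i == n then (n`!)%:R else 0).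

Definition binomial_type (K : fieldType) (t : nat -> {poly K}) : Prop :=
  forall (n : nat) (x y : K),
    (t n).[x + y] = \sum_(k < n.+1) ('C(n, k))%:R * (t k).[x] * (t (n - k)%N).[y].

(* Main.v *)
Require Import Defs.
From HB Require Import structures.
From mathcomp Require Import all_boot all_order all_algebra.
Import GRing.Theory.
Local Open Scope ring_scope.

Section Aux.
Variable K : fieldType.
Hypothesis hK : [pchar K] =i pred0.

Lemma natK_eq0 n : (n%:R == 0 :> K) = (n == 0%N).
Proof. exact: (pcharf0P K).1 hK n. Qed.

Lemma natK_inj m n : (m%:R = n%:R :> K) -> m = n.
Proof.
wlog le: m n / (m <= n)%N => [H|].
  by case: (leqP m n) => h E; [apply: H | symmetry; apply: H => //; apply: ltnW].
move=> E; apply/eqP; rewrite eqn_leq le /=.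
have : ((n - m)%N%:R == 0 :> K) by rewrite natrB // E subrr.
by rewrite natK_eq0 subn_eq0.
Qed.

Lemma poly_eval_eq (p q : {poly K}) : (forall x, p.[x] = q.[x]) -> p = q.
Proof.
move=> H; apply/eqP; rewrite -subr_eq0; apply/negPn/negP => nz.
pose rs : seq K := [seq i%:R | i <- iota 0 (size (p - q))].
have H1 : all (root (p - q)) rs.
  by apply/allP => x _; rewrite /root hornerD hornerN H subrr.
have H2 : uniq rs by rewrite map_inj_uniq ?iota_uniq //; exact: natK_inj.
by have := max_poly_roots nz H1 H2; rewrite size_map size_iota ltnn.
Qed.

Lemma horner_shift (a : K) p x : (shift a p).[x] = p.[x + a].
Proof. by rewrite /shift horner_comp hornerD hornerX hornerC. Qed.

Lemma shift_shift (a c : K) p : shift a (shift c p) = shift (a + c) p.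
Proof. by apply: poly_eval_eq => x; rewrite !horner_shift addrA. Qed.

Lemma shift_lin (a : K) (u v : K) p q : shift a (u *: p + v *: q) = u *: shift a p + v *: shift a q.
Proof. by rewrite /shift comp_polyD !comp_polyZ. Qed.

Lemma shiftZ (a u : K) p : shift a (u *: p) = u *: shift a p.
Proof. by rewrite /shift comp_polyZ. Qed.

Lemma size_shift (a : K) p : size (shift a p) = size p.
Proof. by rewrite /shift size_comp_poly2 // size_XaddC. Qed.

Lemma shift0 (p : {poly K}) : shift 0 p = p.
Proof. by apply: poly_eval_eq => x; rewrite horner_shift addr0. Qed.

Variable d : {linear {poly K} -> {poly K}}.
Hypothesis hd : is_delta_operator d.

Lemma iter_sum i n (c : nat -> K) (p : nat -> {poly K}) :
  iter i d (\sum_(k < n) c k *: p k) = \sum_(k < n) c k *: iter i d (p k).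
Proof.
elim: i => [|i IH] //=; rewrite IH linear_sum; apply: eq_bigr => k _.
by rewrite linearZ.
Qed.

Lemma iterZ i (c : K) p : iter i d (c *: p) = c *: iter i d p.
Proof. by elim: i => [|i IH] //=; rewrite IH linearZ. Qed.

Lemma iterB i p q : iter i d (p - q) = iter i d p - iter i d q.
Proof. by elim: i => [|i IH] //=; rewrite IH linearB. Qed.

Lemma iter_shift i a p : iter i d (shift a p) = shift a (iter i d p).
Proof. by elim: i => [|i IH] //=; rewrite IH hd.1. Qed.

Lemma d1 : d 1 = 0.
Proof.
case: hd => hs [c [_ hc]].
have := hs 1 'X; rewrite hc /shift comp_polyC comp_polyX linearD hc.
by move/(canRL (addKr _)); rewrite addNr. Qed.

Lemma taylor_shift (a : K) p :
  shift a p = \sum_(i < size p) (p^`N(i)).[a] *: 'X^i.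
Proof.
apply: poly_eval_eq => x; rewrite horner_shift addrC nderiv_taylor; last exact: mulrC.
rewrite horner_sum; apply: eq_bigr => i _; by rewrite hornerZ hornerXn.
Qed.

Lemma d_repr p : d p = \sum_(i < size p) (d 'X^i).[0] *: p^`N(i).
Proof.
apply: poly_eval_eq => a.
have -> : (d p).[a] = (d (shift a p)).[0] by rewrite hd.1 horner_shift add0r.
rewrite taylor_shift linear_sum !horner_sum; apply: eq_bigr => i _.
by rewrite linearZ !hornerZ mulrC.
Qed.

Lemma size_d p : (size (d p) <= (size p).-1)%N.
Proof.
rewrite d_repr; apply: (leq_trans (size_sum _ _ _)).
apply/bigmax_leqP => i _; case: i => [[|i]] /= lt.
  by rewrite expr0 d1 horner0 scale0r size_poly0.
apply: (leq_trans (size_scale_leq _ _)).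
apply/leq_sizeP => j hj; rewrite coef_nderivn nth_default ?mul0rn //.
apply: (leq_trans (leqSpred _)); rewrite addSn ltnS.
exact: (leq_trans hj (leq_addl _ _)).
Qed.

Variables (z : nat -> K) (t : nat -> {poly K}).
Hypothesis ht : is_gen_goncarov_basis d z t.

Lemma expand n (p : {poly K}) : (size p <= n)%N -> exists c : nat -> K, p = \sum_(k < n) c k *: t k.
Proof.
elim: n p => [|n IH] p hp.
  by exists (fun _ => 0); move: hp; rewrite leqn0 size_poly_eq0 => /eqP ->; rewrite big_ord0.
have sz := ht.1 n.
have ln : (t n)`_n != 0.
  have := ht.1 n => e; have : lead_coef (t n) != 0.
    by rewrite lead_coef_eq0 -size_poly_gt0 e.
  by rewrite lead_coefE e.
pose a := p`_n / (t n)`_n.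
have [c hc] : exists c : nat -> K, p - a *: t n = \sum_(k < n) c k *: t k.
  apply: IH; apply/leq_sizeP => j hj.
  rewrite coefB coefZ; move: hj; rewrite leq_eqVlt => /orP [/eqP <-|hj].
    by rewrite /a divfK // subrr.
  have hp' := leq_sizeP _ _ hp j hj.
  have ht' := leq_sizeP _ _ (eq_leq sz) j hj.
  by rewrite hp' ht' mulr0 subrr.
exists (fun k => if k == n then a else c k).
rewrite big_ord_recr /= eqxx.
rewrite (eq_bigr (fun k : 'I_n => c k *: t k)); first by rewrite -hc subrK.
by move=> k _; rewrite ifN // neq_ltn ltn_ord.
Qed.

Lemma eval_sum n i (c : nat -> K) : (i < n)%N ->
  (iter i d (\sum_(k < n) c k *: t k)).[z i] = c i * (i`!)%:R.
Proof.
move=> hi; rewrite iter_sum horner_sum (bigD1 (Ordinal hi)) //= big1 ?addr0.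
  by rewrite hornerZ ht.2 eqxx.
move=> k hk; rewrite hornerZ ht.2 ifN ?mulr0 //.
by apply: contra hk => /eqP e; apply/eqP/val_inj; rewrite /= e.
Qed.

Lemma zero_crit n (w : {poly K}) : (size w <= n)%N ->
  (forall i, (i < n)%N -> (iter i d w).[z i] = 0) -> w = 0.
Proof.
move=> hs hz; have [c hc] := @expand n w hs.
rewrite hc big1 // => k _.
have := hz k (ltn_ord k); rewrite hc eval_sum // => /eqP.
rewrite mulf_eq0 natK_eq0 (negbTE (lt0n_neq0 (fact_gt0 _))) orbF => /eqP ->.
by rewrite scale0r.
Qed.

Lemma iter_formula b :
  (forall m, d (t m.+1) = (m.+1)%:R *: shift (- b) (t m)) ->
  forall n i, (i <= n)%N ->
  iter i d (t n) = (n ^_ i)%:R *: shift (- (i%:R * b)) (t (n - i)).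
Proof.
move=> h1 n; elim => [|i IH] hi.
  by rewrite ffactn0 mul0r oppr0 shift0 subn0 scale1r.
rewrite iterS IH ?(ltnW hi) // linearZZ hd.1.
have -> : (n - i = (n - i.+1).+1)%N by rewrite subnSK.
rewrite h1 shiftZ shift_shift scalerA -natrM subnSK // -ffactnSr.
by congr (_ *: shift _ _); rewrite -nat1r mulrDl mul1r opprD addrC.
Qed.

Lemma bin_poly (hb : binomial_type t) n y :
  shift y (t n) = \sum_(k < n.+1) ('C(n,k)%:R * (t (n-k)).[y]) *: t k.
Proof.
apply: poly_eval_eq => x; rewrite horner_shift hb horner_sum.
by apply: eq_bigr => k _; rewrite hornerZ mulrAC.
Qed.

Lemma forward (hb : binomial_type t) : exists b, forall i, z i = i%:R * b.
Proof.
have HA : forall n i y, (i <= n)%N ->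
    (iter i d (t n)).[z i + y] = ('C(n,i) * i`!)%:R * (t (n-i)).[y].
  move=> n i y hi; rewrite -horner_shift -iter_shift (bin_poly hb).
  rewrite (@eval_sum n.+1 i (fun k => 'C(n,k)%:R * (t (n-k)).[y])); last by rewrite ltnS.
  by rewrite natrM mulrAC.
pose b := z 1.
have h1 : forall m, d (t m.+1) = (m.+1)%:R *: shift (- b) (t m).
  move=> m; apply: poly_eval_eq => x; rewrite hornerZ horner_shift.
  have := HA m.+1 1%N (x - b) isT.
  by rewrite /= (addrC b) subrK bin1 muln1 subSS subn0.
exists b => i.
have HB := @iter_formula b h1 i.+1 i (leqnSn i).
have E : forall y, (t 1).[z i + y - i%:R * b] = (t 1).[y].
  move=> y; have := HA i.+1 i y (leqnSn i).
  rewrite HB hornerZ horner_shift bin_ffact subSnn => /mulfI -> //.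
  by rewrite natK_eq0 -lt0n ffact_gt0.
have := E 0; rewrite addr0 !horner_coef (ht.1 1%N) !big_ord_recr !big_ord0 /=.
rewrite !add0r !expr0 !mulr1 !expr1 mulr0 => /addrI /eqP.
rewrite mulf_eq0 subr_eq0 => /orP [|/eqP //].
have : lead_coef (t 1) != 0 by rewrite lead_coef_eq0 -size_poly_gt0 (ht.1 1%N).
by rewrite lead_coefE (ht.1 1%N) => /negbTE ->.
Qed.

Lemma backward b (hz : forall i, z i = i%:R * b) : binomial_type t.
Proof.
have h1 : forall m, d (t m.+1) = (m.+1)%:R *: shift (- b) (t m).
  move=> m.
  have W : shift b (d (t m.+1)) - (m.+1)%:R *: t m = 0.
    apply: (@zero_crit m.+1).
      apply: (leq_trans (size_polyD _ _)); rewrite geq_max; apply/andP; split.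
        by rewrite size_shift; apply: (leq_trans (size_d _)); rewrite (ht.1 m.+1).
      by rewrite size_polyN; apply: (leq_trans (size_scale_leq _ _)); rewrite (ht.1 m).
    move=> i hi; rewrite iterB iterZ hornerD hornerN hornerZ iter_shift horner_shift.
    rewrite -iterSr.
    have -> : z i + b = z i.+1 by rewrite !hz -nat1r mulrDl mul1r addrC.
    rewrite !ht.2 eqSS; have [_|ne] := eqVneq i m; last by rewrite mulr0 subrr.
    by rewrite factS natrM subrr.
  move/subr0_eq: W => W.
  by rewrite -[d _]shift0 -(addNr b) -shift_shift W shiftZ.
move=> n x y.
have W : shift y (t n) - \sum_(k < n.+1) ('C(n,k)%:R * (t (n-k)).[y]) *: t k = 0.
  apply: (@zero_crit n.+1).
    apply: (leq_trans (size_polyD _ _)); rewrite geq_max; apply/andP; split.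
      by rewrite size_shift (ht.1 n).
    rewrite size_polyN; apply: (leq_trans (size_sum _ _ _)); apply/bigmax_leqP => k _.
    by apply: (leq_trans (size_scale_leq _ _)); rewrite (ht.1 k).
  move=> i hi; rewrite iterB hornerD hornerN iter_shift horner_shift.
  rewrite (@eval_sum n.+1 i (fun k => 'C(n,k)%:R * (t (n-k)).[y])) //.
  rewrite (@iter_formula b h1 n i) // hornerZ horner_shift.
  have -> : z i + y + - (i%:R * b) = y by rewrite hz addrAC subrr add0r.
  by rewrite -bin_ffact natrM mulrAC subrr.
move/subr0_eq: W => W.
have := congr1 (fun p => p.[x]) W; rewrite /= horner_shift horner_sum => ->.
by apply: eq_bigr => k _; rewrite hornerZ mulrAC.
Qed.
End Aux.

Theorem mainTheorem14 (K : fieldType) (hK : [pchar K] =i pred0)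
    (d : {linear {poly K} -> {poly K}}) (z : nat -> K) (t : nat -> {poly K})
    (hd : is_delta_operator d) (ht : is_gen_goncarov_basis d z t) :
  binomial_type t <-> exists b : K, forall i : nat, z i = i%:R * b.
Proof.
split; first exact: (@forward K hK d hd z t ht).
move=> [b hb]; exact: (@backward K hK d hd z t ht b hb).
Qed.
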